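(* Let $E$ be a finite-dimensional real Euclidean space with translation space $V$, let $\Phi_{\mathrm{aff}}$ be an affine root system on $E$ with a basis $B$ (corresponding to a chamber), and let $J\subset B$ be such that $DJ$ is linearly independent. Let $\Phi'_{\mathrm{aff}}$ be an affine root subsystem of $\Phi_{\mathrm{aff}}$ containing $(\Phi_{\mathrm{aff}})_J$. Then there exists a basis of $\Phi'_{\mathrm{aff}}$ containing $J$.
   Context: Affine root systems are in the sense of Macdonald. For an affine root $a$, $Da\in V^*$ is its gradient: $a(x+v)=a(x)+(Da)(v)$; $DJ=\{Da\mid a\in J\}$. $(\Phi_{\mathrm{aff}})_J=\{a\in\Phi_{\mathrm{aff}}\mid Da\in\mathbb R\cdot DJ\}$. *)

(* Defs.v *)
From HB Require Import structures.
From mathcomp Require Import all_boot all_order all_algebra.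
From mathcomp Require Import all_classical all_reals all_analysis.
Set Implicit Arguments. Unset Strict Implicit. Unset Printing Implicit Defensive.
Import Order.TTheory GRing.Theory Num.Theory.
Import numFieldNormedType.Exports.
Local Open Scope classical_set_scope.
Local Open Scope ring_scope.

(* The Euclidean space E is modelled as R^n = 'rV[R]_n with the standard
   inner product (origin fixed; V = 'rV[R]_n is its translation space).
   An affine function a : E -> R is represented by its gradient a.1 (an
   element of V, identified with V^* through the inner product) and its
   value a.2 at the origin: a(x) = <x, a.1> + a.2. *)

Definition aff (R : realType) (n : nat) := ('rV[R]_n * R)%type.

Section AffineRoots.
Variables (R : realType) (n : nat).
Implicit Types (a b f : aff R n) (x : 'rV[R]_n) (S J : set (aff R n)).

Definition dotv (u v : 'rV[R]_n) : R := \sum_(i < n) u 0 i * v 0 i.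

Definition aff_eval a x : R := dotv x a.1 + a.2.

Definition grad a : 'rV[R]_n := a.1.

Definition cpair a b : R := 2 * dotv a.1 b.1 / dotv a.1 a.1.

Definition refl_aff a f : aff R n :=
  (f.1 - cpair a f *: a.1, f.2 - cpair a f * a.2).

Definition refl_pt a x : 'rV[R]_n :=
  x - (2 * aff_eval a x / dotv a.1 a.1) *: a.1.

Definition aff_span S f : Prop :=
  exists s : seq (aff R n), {in s, forall a, S a} /\
  exists k : nat -> R,
    f.1 = \sum_(i < size s) k i *: (nth (0, 0) s i).1 /\
    f.2 = \sum_(i < size s) k i * (nth (0, 0) s i).2.

Definition wfun (s : seq (aff R n)) : 'rV[R]_n -> 'rV[R]_n :=
  foldr (fun a g => refl_pt a \o g) id s.

Definition weyl S : set ('rV[R]_n -> 'rV[R]_n) :=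
  [set wfun s | s in [set s : seq (aff R n) | {in s, forall a, S a}]].

Definition acts_properly S : Prop :=
  forall K : set 'rV[R]_n, compact K ->
    finite_set [set w | weyl S w /\ exists2 x, K x & K (w x)].

(* Affine root system in the sense of Macdonald (AR1)-(AR4). *)
Definition is_aff_root_system S : Prop :=
  [/\ (forall a, S a -> a.1 != 0),
      (forall f, aff_span S f),
      (forall a b, S a -> S b -> S (refl_aff a b)),
      (forall a b, S a -> S b -> exists z : int, cpair a b = z%:~R)
    & acts_properly S].

Definition is_aff_root_subsystem S' S : Prop :=
  S' `<=` S /\ (forall a b, S' a -> S' b -> S' (refl_aff a b)).

Definition hyps S : set 'rV[R]_n := [set x | exists2 a, S a & aff_eval a x = 0].

Definition is_chamber S (C : set 'rV[R]_n) : Prop :=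
  exists2 x, (~` hyps S) x & C = connected_component (~` hyps S) x.

Definition is_wall a (C : set 'rV[R]_n) : Prop :=
  exists2 x, aff_eval a x = 0 &
    \forall y \near x, aff_eval a y = 0 -> closure C y.

Definition half a : aff R n := (2^-1 *: a.1, 2^-1 * a.2).

Definition chamber_basis S (C : set 'rV[R]_n) : set (aff R n) :=
  [set a | [/\ S a, ~ S (half a), (forall x, C x -> 0 < aff_eval a x)
             & is_wall a C]].

Definition is_basis S B : Prop :=
  exists2 C, is_chamber S C & B = chamber_basis S C.

Definition grad_lin_indep J : Prop :=
  forall s : seq (aff R n), uniq s -> {in s, forall a, J a} ->
  forall k : nat -> R,
    \sum_(i < size s) k i *: (nth (0, 0) s i).1 = 0 ->
    forall i, (i < size s)%N -> k i = 0.

Definition grad_span J (v : 'rV[R]_n) : Prop :=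
  exists s : seq (aff R n), {in s, forall a, J a} /\
  exists k : nat -> R, v = \sum_(i < size s) k i *: (nth (0, 0) s i).1.

Definition sub_J S J : set (aff R n) := [set a | S a /\ grad_span J (grad a)].

End AffineRoots.

(* Main.v *)
Require Import Defs.
From mathcomp Require Import all_boot all_order all_algebra.
From mathcomp Require Import all_classical all_reals all_analysis.
Import numFieldNormedType.Exports.
Local Open Scope classical_set_scope.

Import Order.TTheory GRing.Theory Num.Theory.

Lemma aff_eval_cont (R : realType) (n : nat) (a : aff R n) :
  continuous (aff_eval a).
Proof.
have H : forall s : seq 'I_n,
    continuous (fun y : 'rV[R]_n => (\sum_(i <- s) y 0 i * a.1 0 i)%R).
  elim=> [|i s IH] x.
    under eq_fun do rewrite big_nil.
    exact: cst_continuous.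
  under eq_fun do rewrite big_cons.
  apply: (@continuousD _ R^o _ (fun y : 'rV[R]_n => (y 0 i * a.1 0 i)%R)
    (fun y : 'rV[R]_n => (\sum_(i <- s) y 0 i * a.1 0 i)%R)); last exact: IH.
  apply: (@continuousM R _ (fun y : 'rV[R]_n => y 0%R i) (fun _ => a.1 0%R i) x);
    [exact: coord_continuous | exact: cst_continuous].
move=> x; rewrite /aff_eval /dotv.
apply: (@continuousD _ R^o _ (fun y : 'rV[R]_n => \sum_(i < n) y 0 i * a.1 0 i)%R
  (fun _ => a.2)).
  exact: H.
exact: cst_continuous.
Qed.

Theorem corollaryA3 (R : realType) (n : nat) (Phi B J Phi' : set (aff R n)) :
  is_aff_root_system Phi -> is_basis Phi B -> J `<=` B -> grad_lin_indep J ->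
  is_aff_root_subsystem Phi' Phi -> sub_J Phi J `<=` Phi' ->
  exists B', is_basis Phi' B' /\ J `<=` B'.
Proof.
move=> _ [C [x0 hx0 ->] ->] JB _ [sub _] subJ.
have hx0' : (~` hyps Phi') x0.
  by move=> [a /sub Pa e]; apply: hx0; exists a.
set C' := connected_component (~` hyps Phi') x0.
have CC' : connected_component (~` hyps Phi) x0 `<=` C'.
  apply: connected_component_max.
  - exact: connected_component_refl.
  - move=> y /connected_component_sub hy [a /sub Pa e]; apply: hy; exists a => //.
  - exact: component_connected.
exists (chamber_basis Phi' C'); split; first by exists C' => //; exists x0.
move=> a Ja; have [Pa nPh pos wall] := JB a Ja.
have P'a : Phi' a.
  apply: subJ; split => //; exists [:: a]; split; first by move=> b; rewrite inE => /eqP ->.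
  by exists (fun _ => 1%R); rewrite big_ord1 scale1r.
split => //.
- by move=> /sub.
- move=> x C'x; rewrite ltNge; apply/negP => hle.
  have pos0 : (0 < aff_eval a x0)%R.
    by apply: pos; apply: connected_component_refl.
  have conn : connected (aff_eval a @` C').
    apply: connected_continuous_connected; first exact: component_connected.
    apply: continuous_subspaceT => y; exact: aff_eval_cont.
  move/connected_intervalP: conn => itv.
  have : (aff_eval a @` C') 0%R.
    apply: (itv (aff_eval a x) (aff_eval a x0)); [by exists x|exists x0 => //; exact: (connected_component_refl hx0')|].
    by rewrite hle /= (ltW pos0).
  move=> [y C'y ey].
  by apply: (connected_component_sub C'y); exists a.
- case: wall => x ex hnear; exists x => //.
  apply: filterS hnear => y h /h; exact: closureS.
Qed.
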